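(* Let $\Gamma$ be a signed bipartite graph on $n$ vertices with adjacency matrix $\begin{bmatrix} O & M\\ M^{\mathrm T} & O\end{bmatrix}$, where $M$ is a square matrix of order $m=n/2$. Then $\Delta(\Gamma)=2^n\det^2(M)\,\Delta^2(M^{\mathrm T}M)$.
   Context: A signed graph is a simple graph with each edge assigned a sign $\pm1$; its adjacency matrix has entry equal to the edge sign for adjacent vertices and $0$ otherwise. For a monic polynomial $f$ of degree $k$ with roots $\alpha_1,\dots,\alpha_k$ (with multiplicity), the discriminant is $\Delta(f)=\prod_{1\le i<j\le k}(\alpha_i-\alpha_j)^2$. For a square matrix $B$, $\Delta(B)$ is the discriminant of $\det(xI-B)$, and $\Delta(\Gamma)$ is the discriminant of the adjacency matrix of $\Gamma$. *)

(* Defs.v *)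
From HB Require Import structures.
From mathcomp Require Import all_boot all_order all_algebra all_field.
Set Implicit Arguments. Unset Strict Implicit. Unset Printing Implicit Defensive.
Import Order.TTheory GRing.Theory Num.Theory.
Local Open Scope ring_scope.

(* A list of the roots (with multiplicity) of a polynomial over the
   algebraically closed field algC; for monic p, p = \prod_(z <- r) ('X - z). *)
Definition rootseqC (p : {poly algC}) : seq algC :=
  sval (closed_field_poly_normal p).

Definition discP (p : {poly algC}) : algC :=
  let r := rootseqC p in
  \prod_(i < size r) \prod_(j < size r | (i < j)%N) (r`_i - r`_j) ^+ 2.

Definition discM (k : nat) (B : 'M[algC]_k) : algC := discP (char_poly B).

Definition mxC (k l : nat) (B : 'M[int]_(k, l)) : 'M[algC]_(k, l) :=
  map_mx (fun z : int => z%:~R) B.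

Definition bip_adj (m : nat) (M : 'M[int]_m) : 'M[int]_(m + m) :=
  block_mx 0 M M^T 0.

(* M has entries in {-1, 0, 1} (edge signs or no edge). *)
Definition signed_mx (k l : nat) (M : 'M[int]_(k, l)) : Prop :=
  forall i j, M i j \in [:: -1; 0; 1].

(* Main.v *)
Require Import Defs.
From HB Require Import structures.
From mathcomp Require Import all_boot all_order all_algebra all_field zify ring.
Import Order.TTheory GRing.Theory Num.Theory.
Local Open Scope ring_scope.

Definition sgnk (k : nat) : algC := \prod_(i < k) \prod_(j < k | (i < j)%N) (-1).

Lemma sgnkS k : sgnk k.+1 = sgnk k * (-1) ^+ k.
Proof.
rewrite /sgnk big_ord_recr /= [X in _ * X]big_pred0; last first.
  by move=> j /=; rewrite ltnNge -ltnS ltn_ord.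
rewrite mulr1; have -> : (-1) ^+ k = \prod_(i < k) (-1 : algC) by rewrite prodr_const card_ord.
rewrite -big_split /=.
apply: eq_bigr => i _.
rewrite big_mkcond big_ord_recr /= ltn_ord -big_mkcond /=.
by [].
Qed.

Lemma sgnk_sq k : sgnk k ^+ 2 = 1.
Proof.
elim: k => [|k IH]; first by rewrite /sgnk big_ord0 expr1n.
by rewrite sgnkS exprMn IH mul1r -exprM mulnC exprM sqrrN expr1n expr1n.
Qed.

Lemma sgnk_double m : sgnk (m + m) = (-1) ^+ m.
Proof.
elim: m => [|m IH]; first by rewrite /sgnk big_ord0 expr0.
rewrite addnS addSn !sgnkS IH -!exprD.
rewrite -[LHS]signr_odd -[RHS]signr_odd; congr (_ ^+ _); rewrite /= !oddD /= !oddD.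
by case: (odd m).
Qed.

Definition Dk (s : seq algC) : algC :=
  \prod_(i < size s) \prod_(j < size s | (i < j)%N) (s`_i - s`_j) ^+ 2.

Definition Ek (s : seq algC) : algC :=
  \prod_(i < size s) \prod_(j < size s | j != i) (s`_i - s`_j).

Lemma Ek_Dk s : Ek s = sgnk (size s) * Dk s.
Proof.
rewrite /Ek /Dk /sgnk.
set k := size s.
set F := fun i j : 'I_k => s`_i - s`_j.
transitivity (\prod_(i < k) (\prod_(j < k | (i < j)%N) F i j) *
              \prod_(i < k) (\prod_(j < k | (j < i)%N) F i j)).
  rewrite -big_split /=; apply: eq_bigr => i _.
  rewrite (bigID (fun j : 'I_k => (i < j)%N)) /=; congr (_ * _).
    apply: eq_bigl => j; rewrite -val_eqE /=; apply/idP/idP => [/andP [] //|h].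
    by apply/andP; split=> //; lia.
  apply: eq_bigl => j; rewrite -val_eqE /=; apply/idP/idP => [/andP [] h1 h2|h].
    lia.
  apply/andP; split; lia.
rewrite [X in _ * X](exchange_big_dep xpredT) //=.
rewrite -big_split -big_split /=; apply: eq_bigr => i _.
rewrite -!big_split /=; apply: eq_bigr => j _.
by rewrite /F -[s`_j - s`_i]opprB mulrN mulN1r expr2.

Qed.

Lemma prod_deriv_Ek (s : seq algC) (p : {poly algC}) :
  p = \prod_(z <- s) ('X - z%:P) -> \prod_(z <- s) p^`().[z] = Ek s.
Proof.
move=> Hp; rewrite (big_nth 0) big_mkord /Ek; apply: eq_bigr => i _.
rewrite Hp (big_nth 0) big_mkord (bigD1 i) //= derivM hornerD !hornerM.
rewrite hornerXsubC subrr mul0r addr0 derivXsubC hornerC mul1r horner_prod.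
by apply: eq_bigr => j _; rewrite hornerXsubC.
Qed.

Lemma discP_deriv (s : seq algC) (p : {poly algC}) :
  p = \prod_(z <- s) ('X - z%:P) ->
  discP p = sgnk (size s) * \prod_(z <- s) p^`().[z].
Proof.
move=> Hp; rewrite /discP /rootseqC.
case: (closed_field_poly_normal p) => r Hr /=.
have lc : lead_coef p = 1 by apply/monicP; rewrite Hp monic_prod_XsubC.
rewrite lc scale1r in Hr.
have pe : perm_eq r s by apply: prod_XsubC_eq; rewrite -Hr -Hp.
rewrite -(perm_big _ pe) /= (@prod_deriv_Ek r p Hr) Ek_Dk (perm_size pe).
by rewrite mulrA -expr2 sgnk_sq mul1r /Dk (perm_size pe).
Qed.

Lemma prod_const_seq (s : seq algC) (c : algC) : \prod_(z <- s) c = c ^+ size s.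
Proof. by elim: s => [|x s IH]; rewrite ?big_nil ?expr0 // big_cons IH exprS. Qed.

Lemma sign_sq m : (-1 : algC) ^+ m * (-1) ^+ m = 1.
Proof. by rewrite -exprMn mulrNN mulr1 expr1n. Qed.

Lemma monic_roots (p : {poly algC}) : p \is monic ->
  p = \prod_(z <- rootseqC p) ('X - z%:P).
Proof.
move=> mp; rewrite /rootseqC; case: (closed_field_poly_normal p) => r Hr /=.
by rewrite {1}Hr (monicP mp) scale1r.
Qed.

Lemma char_poly_bip m (M : 'M[int]_m) :
  char_poly (mxC (bip_adj M)) = char_poly (mxC (M^T *m M)) \Po 'X^2.
Proof.
set N := mxC M.
set Np := map_mx polyC N.
have eA : mxC (bip_adj M) = block_mx 0 N N^T 0.
  by rewrite /mxC /bip_adj map_block_mx !map_mx0 map_trmx.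
rewrite [in LHS]eA.
have eC : char_poly_mx (block_mx 0 N N^T 0) =
    block_mx 'X%:M (- Np) (- Np^T) 'X%:M.
  rewrite /char_poly_mx map_block_mx !map_mx0 map_trmx -/Np.
  rewrite scalar_mx_block opp_block_mx add_block_mx !subr0 !sub0r.
  by congr block_mx; rewrite /Np /N /mxC !map_trmx.
set U : 'M[{poly algC}]_(m + m) := block_mx 'X%:M Np 0 'X%:M.
have eP : char_poly_mx (block_mx 0 N N^T 0) *m U =
    block_mx ('X ^+ 2)%:M 0 (- ('X *: Np^T)) (('X ^+ 2)%:M - Np^T *m Np).
  rewrite eC mulmx_block !mulmx0 !addr0 !mul_scalar_mx !mul_mx_scalar.
  by rewrite scale_scalar_mx -expr2 !scalerN subrr mulNmx addrC.
have dU : \det U = 'X ^+ m * 'X ^+ m by rewrite det_ublock !det_scalar.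
have eq1 := congr1 determinant eP.
rewrite det_mulmx det_lblock dU det_scalar in eq1.
have eR : \det (('X ^+ 2)%:M - Np^T *m Np) = char_poly (mxC (M^T *m M)) \Po 'X^2.
  rewrite /char_poly -det_map_mx /char_poly_mx.
  rewrite map_mxB map_scalar_mx /= comp_polyX.
  congr (\det (_ - _)).
  rewrite -map_mx_comp /mxC map_mxM map_trmx -/N /Np.
  apply/matrixP => i j; rewrite !mxE /= comp_polyC rmorph_sum; apply: eq_bigr => k _.
  by rewrite rmorphM !mxE.
rewrite -eR; apply: (mulIf (x := 'X ^+ m * 'X ^+ m)).
  by rewrite mulf_neq0 // expf_neq0 // polyX_eq0.
by rewrite eq1 mulrC -exprMn -expr2.
Qed.

Theorem lemma4p2 (m : nat) (M : 'M[int]_m) :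
  signed_mx M ->
  discM (mxC (bip_adj M)) =
    2 ^+ (m + m) * (\det (mxC M)) ^+ 2 * (discM (mxC (M^T *m M))) ^+ 2.
Proof.
move=> _.
rewrite /discM char_poly_bip.
set q := char_poly (mxC (M^T *m M)).
have mq : q \is monic by apply: char_poly_monic.
set rq := rootseqC q.
have Hq : q = \prod_(z <- rq) ('X - z%:P) by apply: monic_roots.
have szq : size rq = m.
  have := size_char_poly (mxC (M^T *m M)); rewrite -/q Hq size_prod_XsubC.
  by case.
set r2 := map sqrtC rq ++ map (fun z => - sqrtC z) rq.
have HP : q \Po 'X^2 = \prod_(z <- r2) ('X - z%:P).
  rewrite {1}Hq rmorph_prod big_cat /= !big_map -big_split /=.
  apply: eq_bigr => z _.
  rewrite comp_polyB comp_polyX comp_polyC polyCN opprK -subr_sqr.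
  by rewrite -rmorphXn sqrtCK.
rewrite (@discP_deriv r2 _ HP) (@discP_deriv rq _ Hq).
have sz2 : size r2 = (m + m)%N by rewrite size_cat !size_map szq.
rewrite sz2 sgnk_double.
have -> : \prod_(z <- r2) (q \Po 'X^2)^`().[z] =
    (\prod_(z <- rq) q^`().[z]) ^+ 2 * ((-4) ^+ m * \prod_(z <- rq) z).
  rewrite big_cat /= !big_map -big_split /=.
  rewrite -prodrXl -szq -prod_const_seq -!big_split /=.
  apply: eq_bigr => z _.
  rewrite deriv_comp !hornerM !horner_comp derivXn /= !hornerE.
  rewrite sqrrN sqrtCK.
  have := sqrtCK z; move: (sqrtC z) => s <-.
  rewrite !expr1 /=. ring.
have Hdet : \prod_(z <- rq) z = \det (mxC M) ^+ 2.
  have h0 := char_poly_det (mxC (M^T *m M)).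
  rewrite -/q -horner_coef0 Hq horner_prod in h0.
  have h1 : \prod_(z <- rq) ('X - z%:P).[0] = (-1) ^+ m * \prod_(z <- rq) z.
    by rewrite -szq -prod_const_seq -big_split /=; apply: eq_bigr => z _; rewrite hornerXsubC sub0r mulN1r.
  rewrite h1 in h0.
  have := congr1 (fun x => (-1) ^+ m * x) h0; rewrite /= !mulrA sign_sq !mul1r => ->.
  by rewrite /mxC map_mxM det_mulmx -map_trmx det_tr expr2.
rewrite Hdet.
have e4 : (-4 : algC) ^+ m = (-1) ^+ m * 2 ^+ (m + m).
  by rewrite exprD -exprMn -exprMn; congr (_ ^+ _); ring.
rewrite e4 exprMn sgnk_sq mul1r.
have H := sign_sq m.
move: H; move: ((-1 : algC) ^+ m) (2 ^+ (m + m) : algC) (\det (mxC M)) (\prod_(z <- rq) q^`().[z]) => a b c d H.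
transitivity ((a * a) * (b * c ^+ 2 * d ^+ 2)); first by ring.
by rewrite H mul1r.
Qed.
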